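(* Let $\pi\in[n]^m$ be a picking sequence for chores and let $i\ne j$ be two pickers. If in every suffix of $\pi$ picker $j$ has at least as many rounds as picker $i$, then a risk averse picker $i$ with any additive disvaluation $c_i$ does not envy picker $j$, not even ex-post: for any disvaluations and strategies of the other agents, when $i$ picks greedily, $c_i(B_i)\le c_i(B_j)$. Conversely, if this suffix condition fails, then there is an additive disvaluation $c_i$ for picker $i$ under which $i$ envies $j$, i.e. $\sum_{r\in R_i}c_i(e_{m-r+1})>\sum_{r\in R_j}c_i(e_{m-r+1})$, where $R_i,R_j$ are the rounds of $i$ and $j$ in $\pi$ and the chores are ordered so that $c_i(e_1)\ge\cdots\ge c_i(e_m)$.
   Context: In round $r$ of the picking sequence, picker $\pi_r$ takes one remaining chore. A risk averse agent uses the greedy picking strategy (take a remaining chore of smallest own disvalue); the disvalue such an agent can guarantee from a set $R$ of rounds is $\sum_{r\in R}c_i(e_{m-r+1})$ with chores sorted by non-increasing $c_i$. $B_i,B_j$ denote the final bundles of $i$ and $j$. *)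

(* Defs.v *)
From HB Require Import structures.
From mathcomp Require Import all_boot all_order all_algebra.
Set Implicit Arguments. Unset Strict Implicit. Unset Printing Implicit Defensive.
Import Order.TTheory GRing.Theory Num.Theory.
Local Open Scope ring_scope.

(* Conventions: m chores, represented by 'I_m; n agents 'I_n.
   Rounds are 0-indexed: round r : 'I_m (paper's round r+1).
   A picking sequence is pi : 'I_m -> 'I_n (pi r = picker of round r). *)

Section Picking.
Variables (m n : nat) (pi : 'I_m -> 'I_n).

Definition rounds_from (r : nat) (k : 'I_n) : nat :=
  #|[pred t : 'I_m | (r <= t)%N && (pi t == k)]|.

Definition suffix_cond (i j : 'I_n) : Prop :=
  forall r : nat, (rounds_from r i <= rounds_from r j)%N.

(* A (history-dependent) strategy maps the history of picks made so far
   to the chore picked now. *)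
Definition strategy := seq 'I_m -> 'I_m.

Definition valid_strategy (s : strategy) : Prop :=
  forall h : seq 'I_m, (size h < m)%N -> s h \notin h.

Definition greedy_strategy (R : numDomainType) (c : 'I_m -> R) (s : strategy) : Prop :=
  forall h : seq 'I_m, (size h < m)%N ->
    s h \notin h /\ forall x : 'I_m, x \notin h -> c (s h) <= c x.

Definition history (sigma : 'I_n -> strategy) (r : nat) : seq 'I_m :=
  foldl (fun h t => rcons h (sigma (pi t) h)) [::] (take r (enum 'I_m)).

Definition pick (sigma : 'I_n -> strategy) (t : 'I_m) : 'I_m :=
  sigma (pi t) (history sigma t).

Definition bundle_cost (R : numDomainType) (c : 'I_m -> R)
    (sigma : 'I_n -> strategy) (k : 'I_n) : R :=
  \sum_(t < m | pi t == k) c (pick sigma t).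

(* values of c sorted non-increasingly: c(e_1) >= ... >= c(e_m);
   sorted_val c p = c(e_{p+1}) (0-indexed position p) *)
Definition sorted_val (R : realDomainType) (c : 'I_m -> R) (p : nat) : R :=
  nth 0 (sort (fun x y : R => y <= x) [seq c x | x <- enum 'I_m]) p.

(* guaranteed disvalue of the rounds R_k of agent k:
   sum over rounds r (1-indexed) of c(e_{m-r+1}); with 0-indexed round t
   (= r-1) this is position m-1-t in the non-increasing order. *)
Definition guarantee (R : realDomainType) (c : 'I_m -> R) (k : 'I_n) : R :=
  \sum_(t < m | pi t == k) sorted_val c (m.-1 - t).

End Picking.

(* Main.v *)
Require Import Defs.
From HB Require Import structures.
From mathcomp Require Import all_boot all_order all_algebra.
From mathcomp Require Import zify lra.
From Stdlib Require Import Classical.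
Import Order.TTheory GRing.Theory Num.Theory.
Local Open Scope ring_scope.
Set Implicit Arguments. Unset Strict Implicit. Unset Printing Implicit Defensive.

Lemma history_map (m n : nat) (pi : 'I_m -> 'I_n) (sigma : 'I_n -> strategy m) (k : nat) :
  (k <= m)%N -> history pi sigma k = map (Defs.pick pi sigma) (take k (enum 'I_m)).
Proof.
elim: k => [|k IH] hk; first by rewrite /history !take0.
have hkm : (k < m)%N := hk.
have := take_nth (Ordinal hkm) (s := enum 'I_m) (n := k).
rewrite size_enum_ord => /(_ hkm) E.
have En : nth (Ordinal hkm) (enum 'I_m) k = Ordinal hkm.
  by have := nth_ord_enum (Ordinal hkm) (Ordinal hkm).
rewrite En in E.
have HS : history pi sigma k.+1 = rcons (history pi sigma k) (Defs.pick pi sigma (Ordinal hkm)).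
  rewrite {1}/history E foldl_rcons. reflexivity.
rewrite HS [in RHS]E map_rcons. congr rcons. exact: IH (ltnW hk).
Qed.

Lemma size_history (m n : nat) (pi : 'I_m -> 'I_n) (sigma : 'I_n -> strategy m) (k : nat) :
  (k <= m)%N -> size (history pi sigma k) = k.
Proof. by move=> hk; rewrite history_map // size_map size_takel // size_enum_ord. Qed.

Lemma history_prefix (m n : nat) (pi : 'I_m -> 'I_n) (sigma : 'I_n -> strategy m) (t s : nat) :
  (t <= s)%N -> (s <= m)%N -> history pi sigma t = take t (history pi sigma s).
Proof.
move=> ts sm; rewrite !history_map ?(leq_trans ts) // -map_take take_takel //.
Qed.

Lemma greedy_mono (R : realFieldType) (m n : nat) (pi : 'I_m -> 'I_n) (c : 'I_m -> R)
  (sigma : 'I_n -> strategy m) (i : 'I_n) :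
  (forall k, valid_strategy (sigma k)) -> greedy_strategy c (sigma i) ->
  forall t s : 'I_m, pi t = i -> (t <= s)%N -> c (Defs.pick pi sigma t) <= c (Defs.pick pi sigma s).
Proof.
move=> hv hg t s hti hts.
have ht : (size (history pi sigma t) < m)%N.
  rewrite (size_history pi sigma (ltnW (ltn_ord t))); exact: ltn_ord t.
have [_ H] := hg _ ht.
have -> : Defs.pick pi sigma t = sigma i (history pi sigma t) by rewrite /Defs.pick hti.
apply: H.
apply/negP => hin.
have hs : (size (history pi sigma s) < m)%N.
  rewrite (size_history pi sigma (ltnW (ltn_ord s))); exact: ltn_ord s.
have := hv (pi s) _ hs.
change (sigma (pi s) (history pi sigma s)) with (Defs.pick pi sigma s).
move/negP; apply.
have := history_prefix pi sigma hts (ltnW (ltn_ord s)).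
move=> EE; rewrite EE in hin.
exact: mem_take hin.
Qed.
Lemma split_sum (R : realFieldType) m (f : 'I_m -> R) (P : pred 'I_m) r (hr : (r < m)%N) :
  \sum_(t < m | (r <= t)%N && P t) f t =
  (if P (Ordinal hr) then f (Ordinal hr) else 0) + \sum_(t < m | (r.+1 <= t)%N && P t) f t.
Proof.
case hP: (P (Ordinal hr)).
  rewrite (bigD1 (Ordinal hr)) /= ?leqnn ?hP //; congr (_ + _); apply: eq_bigl => t.
  case: (P t); rewrite ?andbF ?andbT //.
  by rewrite -(inj_eq val_inj) /= ltn_neqAle eq_sym andbC.
rewrite add0r; apply: eq_bigl => t.
case: (eqVneq t (Ordinal hr)) => [->|ne]; first by rewrite hP !andbF.
case: (P t); rewrite ?andbF ?andbT //.
by move: ne; rewrite -(inj_eq val_inj) /= => ne; rewrite ltn_neqAle eq_sym ne.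
Qed.

Lemma sum_empty (R : realFieldType) m (f : 'I_m -> R) (P : pred 'I_m) r :
  (m <= r)%N -> \sum_(t < m | (r <= t)%N && P t) f t = 0.
Proof.
move=> hm; rewrite big1 // => t /andP [h _]; exfalso; have := ltn_ord t; lia.
Qed.

Lemma cntE (R : realFieldType) m n (pi : 'I_m -> 'I_n) r k :
  (rounds_from pi r k)%:R = \sum_(t < m | (r <= t)%N && (pi t == k)) (1 : R).
Proof. by rewrite /rounds_from -sumr_const. Qed.

Lemma key (R : realFieldType) m n (pi : 'I_m -> 'I_n) (v : 'I_m -> R) (i j : 'I_n) (hij : i != j)
 (Hgr : forall t s : 'I_m, pi t = i -> (t <= s)%N -> v t <= v s)
 (Hsuf : suffix_cond pi i j) :
 forall d r, (r + d = m)%N -> forall w : R, (forall t : 'I_m, (r <= t)%N -> w <= v t) ->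
  \sum_(t < m | (r <= t)%N && (pi t == i)) v t
  + ((rounds_from pi r j)%:R - (rounds_from pi r i)%:R) * w
  <= \sum_(t < m | (r <= t)%N && (pi t == j)) v t.
Proof.
elim=> [|d IH] r hrd w hw.
  rewrite !cntE !sum_empty; first lra; lia.
have hr : (r < m)%N by lia.
have Hs := Hsuf r; rewrite -(ler_nat R) !cntE !(split_sum _ _ hr) in Hs.
rewrite !cntE !(split_sum _ _ hr).
set r0 := Ordinal hr.
have IHr := IH r.+1 (ltac:(lia)); rewrite !cntE in IHr.
have hw0 := hw r0 (leqnn r).
move: Hs IHr hw0.
set F := \sum_(_ < _ | (r < _)%N && (pi _ == i)) v _.
set G := \sum_(_ < _ | (r < _)%N && (pi _ == j)) v _.
set A := \sum_(_ < _ | (r < _)%N && (pi _ == j)) 1.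
set B := \sum_(_ < _ | (r < _)%N && (pi _ == i)) 1.
move=> Hs IHr hw0.
case: (eqVneq (pi r0) i) => [hi|hni].
  rewrite hi eqxx (negbTE hij) in Hs *.
  have h2 := IHr (v r0) (fun t ht => Hgr r0 t hi (ltnW ht)).
  have h3 : 0 <= (A - B - 1) * (v r0 - w) by apply: mulr_ge0; lra.
  lra.
have h2 := IHr w (fun t ht => hw t (ltnW ht)).
rewrite ?(negbTE hni) in Hs *.
case: (eqVneq (pi r0) j) => hj.
  rewrite hj eqxx in Hs *.
  lra.
rewrite ?(negbTE hj) in Hs *.
lra.
Qed.

Lemma part2 (R : realFieldType) m n (pi : 'I_m -> 'I_n) (i j : 'I_n) r :
  (rounds_from pi r j < rounds_from pi r i)%N ->
  exists c : 'I_m -> R, (forall x, 0 <= c x) /\ guarantee pi c j < guarantee pi c i.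
Proof.
move=> hlt.
pose f := fun p : nat => if (p < m - r)%N then (1 : R) else 0.
exists (fun x => f (val x)); split.
  by move=> x; rewrite /f; case: ifP.
have Hs : forall p, (p < m)%N -> sorted_val (fun x : 'I_m => f (val x)) p = f p.
  move=> p hp; rewrite /sorted_val.
  have -> : [seq f (val x) | x <- enum 'I_m] = [seq f x | x <- iota 0 m].
    by rewrite -val_enum_ord -map_comp.
  rewrite sorted_sort.
  - by rewrite (nth_map 0%N) ?size_iota // nth_iota.
  - by move=> x y z h1 h2; exact: le_trans h2 h1.
  rewrite sorted_map; apply: sub_sorted (iota_sorted 0 m) => a b /= hab.
  rewrite /f; case: ifP => hb; case: ifP => ha //; try lra.
  exfalso; move/negbT: ha; rewrite -leqNgt => ha; lia.
have G : forall k, guarantee pi (fun x : 'I_m => f (val x)) k = (rounds_from pi r k)%:R.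
  move=> k; rewrite cntE /guarantee big_mkcond [RHS]big_mkcond /=.
  apply: eq_bigr => t _.
  rewrite Hs; last by have := ltn_ord t; lia.
  rewrite /f; case: (pi t == k); rewrite ?andbT ?andbF //.
  have -> : (m.-1 - t < m - r)%N = (r <= t)%N.
    by move: (ltn_ord t) => ht; apply/idP/idP => h; lia.
  by [].
by rewrite !G ltr_nat.
Qed.

Theorem proposition6 (R : realFieldType) (m n : nat) (pi : 'I_m -> 'I_n)
    (i j : 'I_n) (hij : i != j) :
  (suffix_cond pi i j ->
     forall (c : 'I_m -> R), (forall x, 0 <= c x) ->
     forall sigma : 'I_n -> strategy m,
       (forall k, valid_strategy (sigma k)) ->
       greedy_strategy c (sigma i) ->
       bundle_cost pi c sigma i <= bundle_cost pi c sigma j)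
  /\
  (~ suffix_cond pi i j ->
     exists c : 'I_m -> R, (forall x, 0 <= c x) /\
       guarantee pi c j < guarantee pi c i).
Proof.
split.
  move=> Hsuf c c0 sigma hv hg.
  have := key hij (greedy_mono hv hg) Hsuf (erefl (0 + m)%N) (fun t _ => c0 (Defs.pick pi sigma t)).
  rewrite mulr0 addr0 /bundle_cost.
  by rewrite (eq_bigl (fun t => pi t == i)) // (eq_bigl (fun t => pi t == j)).
move=> Hn.
have [r hr] : exists r, ~ (rounds_from pi r i <= rounds_from pi r j)%N.
  by apply: Classical_Pred_Type.not_all_ex_not.
have h : (rounds_from pi r j < rounds_from pi r i)%N by rewrite ltnNge; apply/negP.
exact: part2 h.
Qed.
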